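(* Let $(X_{1,\infty},f_{1,\infty})$ be a topological nonautonomous dynamical system with an $f_{1,\infty}$-invariant sequence $\mu_{1,\infty}$ of Borel probability measures. If $f_{1,\infty}$ is equicontinuous, then the Misiurewicz class $\mathcal{E}_{\mathrm{M}}$ is an admissible class.
   Context: Topological NDS: compact metric spaces $(X_n,\varrho_n)$ and continuous maps $f_n:X_n\to X_{n+1}$; $f_k^n=f_{k+n-1}\circ\cdots\circ f_k$, $f_k^{-n}$ = preimage under $f_k^n$. Invariance: $f_n\mu_n=\mu_{n+1}$. Equicontinuity: for every $\varepsilon>0$ there is $\delta>0$ with $\varrho_{n+1}(f_n x,f_n y)<\varepsilon$ whenever $\varrho_n(x,y)<\delta$, for all $n$ and $x,y\in X_n$. Admissible class: a nonempty class $\mathcal{E}$ of sequences $\{\mathcal{P}_n\}$ of finite Borel partitions of $X_n$ such that (A) each member has $\#\mathcal{P}_n\le N$ for some $N$ and all $n$; (B) $\mathcal{E}$ is closed under passing to termwise coarser sequences; (C) if $\mathcal{P}_{1,\infty}\in\mathcal{E}$ and $m\ge1$ then $\{\bigvee_{i=0}^{m-1}f_k^{-i}\mathcal{P}_{k+i}\}_{k\ge1}\in\mathcal{E}$. Misiurewicz class $\mathcal{E}_{\mathrm{M}}$: the set of sequences $\{\mathcal{P}_n\}$ of finite Borel partitions $\mathcal{P}_n=\{P_{n,1},\dots,P_{n,k_n}\}$ with $\sup_nk_n<\infty$ such that for every $\varepsilon>0$ there exist $\delta>0$ and compact sets $C_{n,i}\subset P_{n,i}$ with, for all $n$: (a)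 $\mu_n(P_{n,i}\setminus C_{n,i})\le\varepsilon$ for all $i$; (b) $\varrho_n(x,y)\ge\delta$ for all $x\in C_{n,i}$, $y\in C_{n,j}$, $i\neq j$. *)

(* Defs.v *)
From HB Require Import structures.
From mathcomp Require Import all_boot all_order all_algebra.
From mathcomp Require Import all_classical all_reals all_analysis.
Set Implicit Arguments. Unset Strict Implicit. Unset Printing Implicit Defensive.
Import Order.TTheory GRing.Theory Num.Theory.
Local Open Scope classical_set_scope.
Local Open Scope ring_scope.

(* Metric spaces that are also pointed (needed to equip them with the Borel
   sigma-algebra via g_sigma_algebraType; harmless since each X_n carries a
   probability measure, hence is nonempty). *)
#[short(type="pointedMetricType")]
HB.structure Definition PointedMetric (K : numDomainType) :=
  { M of Metric K M & isPointed M }.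

Definition borelT {R : realType} (T : pointedMetricType R) :=
  g_sigma_algebraType (@open T).

Section Defs.
Context {R : realType}.

Definition borel_set (T : pointedMetricType R) (A : set T) : Prop :=
  @measurable _ (borelT T) A.

Definition fin_borel_partition (T : pointedMetricType R) (P : set (set T)) :=
  [/\ finite_set P,
      (forall A, P A -> borel_set A),
      (forall A B, P A -> P B -> A <> B -> A `&` B = set0) &
      \bigcup_(A in P) A = setT].

Definition refines (T : Type) (P Q : set (set T)) :=
  forall A, P A -> exists2 B, Q B & A `<=` B.

Variable X : nat -> pointedMetricType R.
Variable f : forall n, X n -> X n.+1.

Fixpoint fcomp (k i : nat) : X k -> X (i + k)%N :=
  match i as i0 return X k -> X (i0 + k)%N with
  | 0 => fun x => x
  | i'.+1 => fun x => @f (i' + k)%N (@fcomp k i' x)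
  end.

Definition pseq := forall n, set (set (X n)).

(* { \bigvee_{i=0}^{m-1} f_k^{-i} P_{k+i} }_k *)
Definition join_seq (P : pseq) (m : nat) : pseq := fun k =>
  [set A | exists g : forall i, set (X (i + k)%N),
     (forall i, (i < m)%N -> P (i + k)%N (g i)) /\
     A = \bigcap_(i in `I_m) (@fcomp k i @^-1` g i)].

Definition admissible (E : set pseq) : Prop :=
  [/\ E !=set0,
      (forall P, E P -> forall n, fin_borel_partition (P n)),
      (forall P, E P -> exists N : nat, forall n, (P n #<= `I_N)%card),
      (forall P Q, E P -> (forall n, fin_borel_partition (Q n)) ->
          (forall n, refines (P n) (Q n)) -> E Q) &
      (forall P m, E P -> (1 <= m)%N -> E (join_seq P m))].

Variable mu : forall n, probability (borelT (X n)) R.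

Definition misiurewicz_class : set pseq :=
  [set P | [/\ forall n, fin_borel_partition (P n),
     exists N : nat, forall n, (P n #<= `I_N)%card &
     forall eps : R, 0 < eps -> exists2 delta : R, 0 < delta &
       exists C : forall n, set (X n) -> set (X n), forall n,
         (forall A, P n A ->
            [/\ C n A `<=` A, compact (C n A) &
                (mu n (A `\` C n A) <= eps%:E)%E]) /\
         (forall A B, P n A -> P n B -> A <> B ->
            forall x y, C n A x -> C n B y -> delta <= mdist x y)]].

End Defs.

Definition equicontinuous_nds {R : realType} (X : nat -> pointedMetricType R)
  (f : forall n, X n -> X n.+1) : Prop :=
  forall eps : R, 0 < eps -> exists2 delta : R, 0 < delta &
    forall n (x y : X n), mdist x y < delta -> mdist (f n x) (f n y) < eps.

(* Main.v *)
Require Import Defs.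
From HB Require Import structures.
From mathcomp Require Import all_boot all_order all_algebra.
From mathcomp Require Import all_classical all_reals all_analysis.
Import Order.TTheory GRing.Theory Num.Theory.
Local Open Scope classical_set_scope.
Local Open Scope ring_scope.

Lemma dchoice2 (I : Type) (A : I -> Type) (T : forall i, A i -> Type)
  (Pr : forall i a, T i a -> Prop) :
  (forall i a, exists x, Pr i a x) -> exists g : forall i a, T i a, forall i a, Pr i a (g i a).
Proof.
move=> H; exists (fun i a => projT1 (cid (H i a))) => i a.
exact: (projT2 (cid (H i a))).
Qed.
Lemma dchoice1 (I : Type) (T : I -> Type) (Pr : forall i, T i -> Prop) :
  (forall i, exists x, Pr i x) -> exists g : forall i, T i, forall i, Pr i (g i).
Proof.
move=> H; exists (fun i => projT1 (cid (H i))) => i.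
exact: (projT2 (cid (H i))).
Qed.
Lemma enum_of_card (T : Type) (S : set T) (N : nat) :
  (S #<= `I_N)%card -> S !=set0 -> exists F : nat -> T, S = F @` `I_N.
Proof.
move=> /ocard_geP/surjPex[g gs] [a0 Sa0].
exists (fun j => if pselect (S (odflt a0 (g j))) is left _ then odflt a0 (g j) else a0).
apply/seteqP; split => [x Sx|_ [j jN <-]]; last by case: pselect.
have gj : (some @` S) (Some x) by exists x.
have := gs _ gj; case=> j' j'N gj'.
by exists j' => //; rewrite gj' /=; case: pselect.
Qed.
Lemma card_of_img (T : Type) (S : set T) (M : nat) (F : nat -> T) :
  S `<=` F @` `I_M -> (S #<= `I_M)%card.
Proof.
move=> sub; apply: card_le_trans (subset_card_le sub) _.
exact: card_image_le.
Qed.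

Section S.
Context {R : realType} (X : nat -> pointedMetricType R) (f : forall n, X n -> X n.+1)
  (mu : forall n, probability (borelT (X n)) R).
Local Notation fc k i := (@fcomp _ X f k i).

Lemma open_borel n (A : set (X n)) : open A -> borel_set A.
Proof. by move=> oA; apply: sub_gen_smallest. Qed.

Lemma closed_borel n (A : set (X n)) : closed A -> borel_set A.
Proof.
move=> cA; rewrite -[A]setCK; apply: (@measurableC _ (borelT (X n))).
by apply: open_borel; rewrite openC.
Qed.

Lemma cont_borel n m (g : X n -> X m) : continuous g ->
  forall B, borel_set B -> borel_set (g @^-1` B).
Proof.
move=> cg B mB.
have mg : @measurable_fun _ _ (borelT (X n)) (borelT (X m)) setT g.
  apply: (@measurability _ _ (borelT (X n)) (borelT (X m)) setT g (@open (X m))) => //.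
  move=> _ [C oC <-]; rewrite setTI; apply: open_borel.
  by move: oC; apply: (proj1 (continuousP g)).
by have := mg (@measurableT _ (borelT (X n))) B mB; rewrite setTI.
Qed.

Lemma fcomp_cont (hc : forall n, continuous (f n)) k i : continuous (fc k i).
Proof.
elim: i => [|i IH] /= x; first exact: cvg_id.
exact: (continuous_comp (IH x) (hc _ _)).
Qed.

Lemma fcomp_inv (hc : forall n, continuous (f n))
  (hi : forall n (B : set (X n.+1)), borel_set B -> mu n (f n @^-1` B) = mu n.+1 B)
  k i (B : set (X (i + k)%N)) : borel_set B -> mu k (fc k i @^-1` B) = mu (i + k)%N B.
Proof.
elim: i B => [|i IH] B mB //=.
rewrite -[in RHS]hi //.
have -> : fc k i.+1 @^-1` B = fc k i @^-1` (f (i + k) @^-1` B) by [].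
by apply: IH; apply: cont_borel.
Qed.

Lemma equi_iter (he : equicontinuous_nds f) i (eps : R) : 0 < eps -> exists2 delta : R, 0 < delta &
  forall k (x y : X k), mdist x y < delta -> mdist (fc k i x) (fc k i y) < eps.
Proof.
elim: i eps => [|i IH] eps e0; first by exists eps.
have [d1 d10 h1] := he eps e0.
have [d d0 h] := IH d1 d10.
by exists d => // k x y /h /h1.
Qed.

Lemma equi_iter_m (he : equicontinuous_nds f) m (eps : R) : 0 < eps -> exists2 delta : R, 0 < delta &
  forall i k (x y : X k), (i < m)%N -> mdist x y < delta -> mdist (fc k i x) (fc k i y) < eps.
Proof.
move=> e0; elim: m => [|m [d d0 IH]]; first by exists 1 => // ? ? ? ? ?.
have [d' d'0 h'] := equi_iter he m eps e0.
exists (Num.min d d'); first by rewrite lt_min d0 d'0.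
move=> i k x y; rewrite ltnS leq_eqVlt => /orP[/eqP->|im]; rewrite lt_min => /andP[xd xd'].
  exact: h'.
exact: IH.
Qed.

Lemma meas_union k (F : nat -> set (X k)) m (e : R) :
  (forall i, (i < m)%N -> borel_set (F i)) ->
  (forall i, (i < m)%N -> (mu k (F i) <= e%:E)%E) ->
  forall A, borel_set A -> A `<=` \bigcup_(i in `I_m) F i ->
  (mu k A <= (m%:R * e)%:E)%E.
Proof.
move=> Fm Fe A mA AF.
rewrite bigcup_mkord in AF.
apply: (le_trans (content_subadditive (mu k) _ mA AF)) => [i /= im|].
  exact: Fm.
apply: (le_trans (y := \sum_(i < m) e%:E)%E).
  by apply: lee_sum => i _; apply: Fe.
by rewrite sumEFin sumr_const card_ord mulr_natl.
Qed.


Lemma part_uniq {n} {Q : set (set (X n))} : fin_borel_partition Q ->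
  forall B B' x, Q B -> Q B' -> B x -> B' x -> B = B'.
Proof.
case=> _ _ hd _ B B' x QB QB' Bx B'x.
case: (pselect (B = B')) => // /(hd _ _ QB QB') E.
by have : (B `&` B') x by []; rewrite E.
Qed.

Lemma part_cov {n} {Q : set (set (X n))} : fin_borel_partition Q ->
  forall x, exists2 B, Q B & B x.
Proof.
case=> _ _ _ cov x.
have : (\bigcup_(A in Q) A) x by rewrite cov.
by case=> B QB Bx; exists B.
Qed.

Lemma mis_nonempty (hcpt : forall n, compact [set: X n]) :
  misiurewicz_class mu (fun n => [set setT]).
Proof.
split.
- move=> n; split.
  + exact: finite_set1.
  + by move=> A ->; exact: (@measurableT _ (borelT (X n))).
  + by move=> A B -> ->.
  + by rewrite bigcup_set1.
- exists 1%N => n; apply: (@card_of_img _ _ _ (fun _ => setT)).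
  by move=> A ->; exists 0%N.
- move=> eps e0; exists 1 => //; exists (fun n A => A) => n; split.
  + move=> A ->; split => //.
    have -> : ([set: X n] `\` [set: X n]) = set0 by apply/seteqP; split=> x // [].
    by rewrite measure0 lee_fin ltW.
  + by move=> A B -> ->.
Qed.

Lemma mis_coarse (hcpt : forall n, compact [set: X n]) P Q :
  misiurewicz_class mu P -> (forall n, fin_borel_partition (Q n)) ->
  (forall n, refines (P n) (Q n)) -> misiurewicz_class mu Q.
Proof.
move=> [hP [N hN] hM] hQ href.
have Pne n : P n !=set0.
  by have [A PA _] := part_cov (hP n) point; exists A.
have [F hF] : exists F : forall n, nat -> set (X n), forall n, P n = F n @` `I_N.
  apply: (@dchoice1 nat (fun n => nat -> set (X n)) (fun n F => P n = F @` `I_N)) => n.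
  exact: enum_of_card (hN n) (Pne n).
have [h hh] : exists h : forall n, set (X n) -> set (X n),
    forall n A, P n A -> Q n (h n A) /\ A `<=` h n A.
  apply: (@dchoice2 nat (fun n => set (X n)) (fun n _ => set (X n)) (fun n A B => P n A -> Q n B /\ A `<=` B)) => n A.
  case: (pselect (P n A)) => PA; last by exists set0.
  by have [B QB AB] := href n A PA; exists B.
have hF' n j : (j < N)%N -> P n (F n j) by move=> jN; rewrite hF; exists j.
have hcov n x : exists2 j, (j < N)%N & F n j x.
  have [A PA Ax] := part_cov (hP n) x.
  by move: PA; rewrite hF => -[j jN Fj]; exists j => //; rewrite Fj.
split => //.
- exists N.+1 => n.
  apply: (@card_of_img _ _ _ (fun j => if (j < N)%N then h n (F n j) else set0)).
  move=> B QB; case: (pselect (B = set0)) => [->|].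
    by exists N => //=; rewrite ltnn.
  move/eqP/set0P => [x Bx]; have [j jN Fjx] := hcov n x.
  exists j; first by rewrite /= ltnS ltnW.
  rewrite /= jN; have [hQ1 hQ2] := hh n _ (hF' n j jN).
  by apply: (part_uniq (hQ n) _ _ _ hQ1 QB (hQ2 _ Fjx) Bx).
- move=> eps e0.
  pose e' := eps / N.+1%:R.
  have e'0 : 0 < e' by rewrite divr_gt0.
  have [d d0 [C0 hC0]] := hM e' e'0.
  exists d => //.
  exists (fun n B => \bigcup_(j in `I_N)
     (if pselect (F n j `<=` B) is left _ then C0 n (F n j) else set0)) => n.
  have [hC1 hC2] := hC0 n.
  have C0cl j : (j < N)%N -> closed (C0 n (F n j)).
    move=> jN; apply: compact_closed; first exact: metric_hausdorff.
    by have [_ + _] := hC1 _ (hF' n j jN).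
  have Ccl B : closed (\bigcup_(j in `I_N)
     (if pselect (F n j `<=` B) is left _ then C0 n (F n j) else set0)).
    apply: closed_bigcup; first exact: finite_II.
    by move=> j jN; case: pselect => _; [exact: C0cl | exact: closed0].
  split.
  + move=> B QB; split.
    * move=> x [j jN]; case: pselect => // FB Cx; apply: FB.
      by have [+ _ _] := hC1 _ (hF' n j jN); apply.
    * exact: subclosed_compact (Ccl B) (hcpt n) (subsetT _).
    * apply: (le_trans (@meas_union n (fun j => F n j `\` C0 n (F n j)) N e' _ _ _ _ _)).
      - move=> j jN; apply: (@measurableD _ (borelT (X n))).
          by have [_ + _ _] := hP n; apply; apply: hF'.
        by apply: closed_borel; apply: C0cl.
      - by move=> j jN; have [_ _ +] := hC1 _ (hF' n j jN).
      - apply: (@measurableD _ (borelT (X n))); first by have [_ + _ _] := hQ n; apply.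
        by apply: closed_borel; apply: Ccl.
      - move=> x [Bx nCx]; have [j jN Fjx] := hcov n x; exists j => //; split => // C0x.
        apply: nCx; exists j => //; case: pselect => // nFB; apply: nFB.
        have [hQ1 hQ2] := hh n _ (hF' n j jN).
        by rewrite (part_uniq (hQ n) _ _ _ QB hQ1 Bx (hQ2 _ Fjx)).
      - rewrite lee_fin /e' mulrA ler_pdivrMr ?ltr0Sn // mulrC.
        by apply: ler_wpM2l; [exact: ltW | rewrite ler_nat].
  + move=> B B' QB QB' BB' x y [j jN] + [j' j'N].
    case: pselect => // FjB Cx; case: pselect => // Fj'B' Cy.
    apply: (hC2 (F n j) (F n j') (hF' n j jN) (hF' n j' j'N) _ x y Cx Cy) => E.
    have Fjx : F n j x by have [+ _ _] := hC1 _ (hF' n j jN); apply.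
    apply: BB'; apply: (part_uniq (hQ n) _ _ _ QB QB' (FjB _ Fjx)).
    by apply: Fj'B'; rewrite -E.
Qed.

Fixpoint enumJ (F : forall n, nat -> set (X n)) (N k m : nat) : nat -> set (X k) :=
  match m with
  | 0 => fun _ => setT
  | m'.+1 => fun j => enumJ F N k m' (j %/ N)%N `&` (fc k m' @^-1` F (m' + k)%N ((j %% N)%N))
  end.

Lemma enumJ_cover (P : pseq X) (F : forall n, nat -> set (X n)) N k m :
  (forall n, P n = F n @` `I_N) ->
  forall g : forall i, set (X (i + k)%N), (forall i, (i < m)%N -> P (i + k)%N (g i)) ->
  exists2 j, (j < N ^ m)%N & enumJ F N k m j = \bigcap_(i in `I_m) (fc k i @^-1` g i).
Proof.
move=> hF g; elim: m => [|m IH] hg.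
  by exists 0%N => //=; rewrite bigcap_mkord big_ord0.
have [j jlt Ej] : exists2 j, (j < N ^ m)%N &
    enumJ F N k m j = \bigcap_(i in `I_m) (fc k i @^-1` g i).
  by apply: IH => i im; apply: hg; rewrite ltnS ltnW.
have : P (m + k)%N (g m) by apply: hg.
rewrite hF => -[q qN Fq].
have N0 : (0 < N)%N by apply: leq_ltn_trans qN.
exists (j * N + q)%N.
  rewrite expnSr; apply: (@leq_trans (j.+1 * N)%N).
    by rewrite mulSn addnC ltn_add2r.
  by apply: leq_mul.
rewrite /= divnMDl // divn_small // addn0 Ej.
rewrite modnMDl modn_small // Fq.
by rewrite !bigcap_mkord big_ord_recr.
Qed.

Lemma mis_join (hcpt : forall n, compact [set: X n])
  (hc : forall n, continuous (f n))
  (hi : forall n (B : set (X n.+1)), borel_set B -> mu n (f n @^-1` B) = mu n.+1 B)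
  (he : equicontinuous_nds f) P m :
  misiurewicz_class mu P -> (1 <= m)%N -> misiurewicz_class mu (join_seq f P m).
Proof.
move=> [hP [N hN] hM] m1.
have Pne n : P n !=set0.
  by have [A PA _] := part_cov (hP n) point; exists A.
have [F hF] : exists F : forall n, nat -> set (X n), forall n, P n = F n @` `I_N.
  apply: (@dchoice1 nat (fun n => nat -> set (X n)) (fun n F => P n = F @` `I_N)) => n.
  exact: enum_of_card (hN n) (Pne n).
have [rep hrep] : exists rep : forall k, set (X k) -> forall i, set (X (i + k)%N),
    forall k A, join_seq f P m A ->
      (forall i, (i < m)%N -> P (i + k)%N (rep k A i)) /\
      A = \bigcap_(i in `I_m) (fc k i @^-1` rep k A i).
  apply: (@dchoice2 nat (fun k => set (X k)) (fun k _ => forall i, set (X (i + k)%N))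
    (fun k A g => join_seq f P m A -> (forall i, (i < m)%N -> P (i + k)%N (g i)) /\
      A = \bigcap_(i in `I_m) (fc k i @^-1` g i))) => k A.
  case: (pselect (join_seq f P m A)) => [[g [hg ->]]|nJ]; last by exists (fun i => set0).
  by exists g.
have pre_borel k i (B : set (X (i + k)%N)) : borel_set B -> borel_set (fc k i @^-1` B).
  exact: cont_borel (fcomp_cont hc k i) B.
have in_rep k (A : set (X k)) x i : join_seq f P m A -> A x -> (i < m)%N ->
    rep k A i (fc k i x).
  move=> JA Ax im; have [_ hA] := hrep k A JA; move: Ax; rewrite {1}hA; exact: (fun H => H i im).
have diff_rep k (A B : set (X k)) : join_seq f P m A -> join_seq f P m B -> A <> B ->
    exists2 i, (i < m)%N & rep k A i <> rep k B i.
  move=> JA JB AB; apply: contrapT => H; apply: AB.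
  have [_ ->] := hrep k A JA; have [_ ->] := hrep k B JB.
  apply: eq_bigcapr => i im; congr (_ @^-1` _).
  by apply: contrapT => ne; apply: H; exists i.
have Jsub k : join_seq f P m (n:=k) `<=` enumJ F N k m @` `I_(N ^ m).
  move=> A [g [hg ->]].
  have [j jlt Ej] := @enumJ_cover P F N k m hF g hg.
  by exists j.
split.
- move=> k; split.
  + by apply/finite_set_leP; exists (N ^ m)%N; apply: card_of_img (Jsub k).
  + move=> A [g [hg ->]]; apply: fin_bigcap_measurable; first exact: finite_II.
    move=> i im; apply: pre_borel.
    by have [_ + _ _] := hP (i + k)%N; apply; apply: hg.
  + move=> A B JA JB AB; apply/seteqP; split => // x [Ax Bx].
    have [i im ne] := diff_rep k A B JA JB AB.
    apply: ne; apply: (part_uniq (hP (i + k)%N) _ _ (fc k i x)).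
    * by have [+ _] := hrep k A JA; apply.
    * by have [+ _] := hrep k B JB; apply.
    * exact: in_rep.
    * exact: in_rep.
  + apply/seteqP; split => // x _.
    have [g hg] : exists g : forall i, set (X (i + k)%N),
        forall i, P (i + k)%N (g i) /\ g i (fc k i x).
      apply: (@dchoice1 nat (fun i => set (X (i + k)%N))
         (fun i B => P (i + k)%N B /\ B (fc k i x))) => i.
      by have [B PB Bx] := part_cov (hP (i + k)%N) (fc k i x); exists B.
    exists (\bigcap_(i in `I_m) (fc k i @^-1` g i)).
      by exists g; split => // i _; case: (hg i).
    by move=> i _; case: (hg i).
- exists (N ^ m)%N => k; exact: card_of_img (Jsub k).
- move=> eps e0.
  pose e' := eps / m%:R.
  have m0 : (0 < m%:R :> R) by rewrite ltr0n.
  have e'0 : 0 < e' by rewrite divr_gt0.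
  have [d' d'0 [C0 hC0]] := hM e' e'0.
  have [dl dl0 hdl] := @equi_iter_m he m d' d'0.
  exists dl => //.
  exists (fun k A => \bigcap_(i in `I_m) (fc k i @^-1` C0 (i + k)%N (rep k A i))) => k.
  have C0cl i (B : set (X (i + k)%N)) : P (i + k)%N B -> closed (C0 (i + k)%N B).
    move=> PB; apply: compact_closed; first exact: metric_hausdorff.
    by have [_ + _] := (hC0 (i + k)%N).1 _ PB.
  have Ccl (A : set (X k)) : join_seq f P m A ->
      closed (\bigcap_(i in `I_m) (fc k i @^-1` C0 (i + k)%N (rep k A i))).
    move=> JA; have [hg _] := hrep k A JA.
    apply: closed_bigI => i im.
    by apply: (proj1 (continuous_closedP _) (fcomp_cont hc k i)); apply: C0cl; apply: hg.
  split.
  + move=> A JA; have [hg hA] := hrep k A JA; split.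
    * move=> x Cx; rewrite hA => i im.
      have [+ _ _] := (hC0 (i + k)%N).1 _ (hg i im); apply; exact: Cx i im.
    * exact: subclosed_compact (Ccl A JA) (hcpt k) (subsetT _).
    * apply: (le_trans (@meas_union k (fun i => fc k i @^-1`
          (rep k A i `\` C0 (i + k)%N (rep k A i))) m e' _ _ _ _ _)).
      - move=> i im; apply: pre_borel; apply: (@measurableD _ (borelT (X (i + k)%N))).
          by have [_ + _ _] := hP (i + k)%N; apply; apply: hg.
        by apply: closed_borel; apply: C0cl; apply: hg.
      - move=> i im; rewrite fcomp_inv //.
          by have [_ _ +] := (hC0 (i + k)%N).1 _ (hg i im).
        apply: (@measurableD _ (borelT (X (i + k)%N))).
          by have [_ + _ _] := hP (i + k)%N; apply; apply: hg.
        by apply: closed_borel; apply: C0cl; apply: hg.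
      - apply: (@measurableD _ (borelT (X k))).
          rewrite hA; apply: fin_bigcap_measurable; first exact: finite_II.
          move=> i im; apply: pre_borel.
          by have [_ + _ _] := hP (i + k)%N; apply; apply: hg.
        by apply: closed_borel; apply: Ccl.
      - move=> x [Ax nCx].
        have [i im ni] : exists2 i, (i < m)%N & ~ C0 (i + k)%N (rep k A i) (fc k i x).
          apply: contrapT => H; apply: nCx => i im.
          by apply: contrapT => ni; apply: H; exists i.
        by exists i => //; split => //; apply: in_rep.
      - by rewrite lee_fin /e' mulrCA divff ?mulr1 // gt_eqF.
  + move=> A B JA JB AB x y Cx Cy.
    have [i im ne] := diff_rep k A B JA JB AB.
    have [hgA _] := hrep k A JA; have [hgB _] := hrep k B JB.
    have h := (hC0 (i + k)%N).2 _ _ (hgA i im) (hgB i im) ne _ _ (Cx i im) (Cy i im).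
    rewrite leNgt; apply/negP => lt.
    by have := hdl i k x y im lt; rewrite ltNge h.
Qed.

Theorem mainTheorem7' 
  (hcpt : forall n, compact [set: X n])
  (hc : forall n, continuous (f n))
  (hi : forall n (B : set (X n.+1)), borel_set B -> mu n (f n @^-1` B) = mu n.+1 B)
  (he : equicontinuous_nds f) :
  admissible f (misiurewicz_class mu).
Proof.
split.
- by exists (fun n => [set setT]); apply: mis_nonempty.
- by move=> P [].
- by move=> P [].
- by move=> P Q hP hQ href; apply: mis_coarse hP hQ href.
- by move=> P m hP m1; apply: mis_join.
Qed.

End S.

Theorem mainTheorem7 (R : realType) (X : nat -> pointedMetricType R)
  (f : forall n, X n -> X n.+1)
  (mu : forall n, probability (borelT (X n)) R) :
  (forall n, compact [set: X n]) ->
  (forall n, continuous (f n)) ->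
  (forall n (B : set (X n.+1)), borel_set B ->
      mu n (f n @^-1` B) = mu n.+1 B) ->
  equicontinuous_nds f ->
  admissible f (misiurewicz_class mu).
Proof.
move=> hcpt hc hi he.
exact: (@mainTheorem7' R X f mu hcpt hc hi he).
Qed.
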